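(* Consider an unlabeled tabletop rearrangement instance in which all objects have congruent disc footprints (uniform cylinders). Then its unlabeled dependency graph is a planar bipartite graph with maximum degree at most $5$.
   Context: A tabletop rearrangement instance consists of $n$ objects (generalized cylinders of equal height, so only their planar footprints matter) in a bounded planar workspace, a start arrangement and a goal arrangement. An arrangement assigns to each object a pose in $SE(2)$; it is feasible if no two placed footprints overlap, where two placed footprints overlap if their interiors intersect (for discs of radius $r$: centers at distance $<2r$). Both the start and goal arrangements are feasible. In the unlabeled setting objects are interchangeable. The unlabeled dependency graph is the bipartite graph with one start vertex for each start pose and one goal vertex for each goal pose, with an edge between a start vertex and a goal vertex iff a footprint placed at that start pose overlaps a footprint placed at that goal pose. *)

(* Defs.v *)
From HB Require Import structures.
From mathcomp Require Import all_boot all_order all_algebra.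
From mathcomp Require Import all_classical all_reals topology normedtype.
Set Implicit Arguments. Unset Strict Implicit. Unset Printing Implicit Defensive.
Import Order.TTheory GRing.Theory Num.Theory.
Import numFieldNormedType.Exports.
Local Open Scope ring_scope.
Local Open Scope classical_set_scope.

Section Defs.
Variable R : realType.

Local Notation point := (R * R)%type.

(* Two disc footprints of radius r centred at c and d overlap (their
   interiors intersect) iff the distance of the centres is < 2r;
   written with squared Euclidean distance. *)
Definition discs_overlap (r : R) (c d : point) : Prop :=
  (c.1 - d.1) ^+ 2 + (c.2 - d.2) ^+ 2 < (2 * r) ^+ 2.

Definition feasible (n : nat) (r : R) (a : 'I_n -> point) : Prop :=
  forall i j : 'I_n, i != j -> ~ discs_overlap r (a i) (a j).

(* Unlabeled dependency graph: vertices are start poses (inl i) and goal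
   poses (inr j); adjacency (symmetric) iff the footprints overlap. *)
Definition udg (n : nat) (r : R) (s g : 'I_n -> point)
  (u v : 'I_n + 'I_n) : Prop :=
  match u, v with
  | inl i, inr j => discs_overlap r (s i) (g j)
  | inr j, inl i => discs_overlap r (s i) (g j)
  | _, _ => False
  end.

Definition unit_interval : set R := [set t | 0 <= t <= 1].

Definition planar_drawing (V : finType) (E : V -> V -> Prop)
  (p : V -> point) (arc : V -> V -> R -> point) : Prop :=
  injective p /\
  forall u v, E u v ->
    [/\ ({within unit_interval, continuous (arc u v)}),
        arc u v 0 = p u /\ arc u v 1 = p v,
        (forall t t', unit_interval t -> unit_interval t' -> arc u v t = arc u v t' -> t = t'),
        (forall t w, 0 < t < 1 -> arc u v t <> p w) &
        (forall u' v', E u' v' -> ~ (u' = u /\ v' = v) -> ~ (u' = v /\ v' = u) ->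
           forall t t', 0 < t < 1 -> 0 < t' < 1 -> arc u v t <> arc u' v' t')].

Definition planar (V : finType) (E : V -> V -> Prop) : Prop :=
  exists p arc, planar_drawing E p arc.

Definition max_degree_le (V : finType) (E : V -> V -> Prop) (k : nat) : Prop :=
  forall u : V, exists S : {set V}, (forall v, E u v -> v \in S) /\ (#|S| <= k)%N.

Definition bipartite_between (n : nat) (E : 'I_n + 'I_n -> 'I_n + 'I_n -> Prop) : Prop :=
  forall u v, E u v -> match u, v with inl _, inr _ | inr _, inl _ => True | _, _ => False end.

End Defs.

(* Main.v *)
Require Import Defs.
From mathcomp Require Import all_boot all_order all_algebra.
From mathcomp Require Import all_classical all_reals topology normedtype.
From mathcomp Require Import ring lra.
Import Order.TTheory GRing.Theory Num.Theory.
Import numFieldNormedType.Exports.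
Local Open Scope ring_scope.


Definition Nr {R : realType} (x y : R) : R := Num.sqrt (x ^+ 2 + y ^+ 2).

Lemma Nr_ge0 {R : realType} (x y : R) : 0 <= Nr x y.
Proof. exact: sqrtr_ge0. Qed.

Lemma Nr_sqr {R : realType} (x y : R) : Nr x y ^+ 2 = x ^+ 2 + y ^+ 2.
Proof. by rewrite /Nr sqr_sqrtr //; nra. Qed.

Lemma Nr_le {R : realType} (c x y : R) : 0 <= c -> (c <= Nr x y) = (c ^+ 2 <= x ^+ 2 + y ^+ 2).
Proof.
move=> c0; rewrite -{1}(ger0_norm c0) -sqrtr_sqr /Nr ler_sqrt //; nra.
Qed.

Lemma Nr_lt {R : realType} (c x y : R) : 0 <= c -> (Nr x y < c) = (x ^+ 2 + y ^+ 2 < c ^+ 2).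
Proof. by move=> c0; rewrite !ltNge Nr_le. Qed.

Lemma Nr_lec {R : realType} (c x y : R) : 0 <= c -> (Nr x y <= c) = (x ^+ 2 + y ^+ 2 <= c ^+ 2).
Proof.
move=> c0; rewrite -{1}(ger0_norm c0) -sqrtr_sqr /Nr ler_sqrt //; nra.
Qed.

Lemma Nr_scale {R : realType} (t x y : R) : Nr (t * x) (t * y) = `|t| * Nr x y.
Proof.
rewrite /Nr -sqrtr_sqr -sqrtrM ?sqr_ge0 //; congr Num.sqrt; ring.
Qed.

Lemma Nr_sym {R : realType} (x y : R) : Nr (- x) (- y) = Nr x y.
Proof. by rewrite /Nr !sqrrN. Qed.

Lemma Nr_tri {R : realType} (x1 x2 y1 y2 : R) :
  Nr (x1 + y1) (x2 + y2) <= Nr x1 x2 + Nr y1 y2.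
Proof.
have hA := Nr_ge0 x1 x2; have hB := Nr_ge0 y1 y2.
rewrite Nr_lec; last by nra.
have hs1 := Nr_sqr x1 x2; have hs2 := Nr_sqr y1 y2.
have hd : x1 * y1 + x2 * y2 <= Nr x1 x2 * Nr y1 y2.
  have hp : 0 <= Nr x1 x2 * Nr y1 y2 by nra.
  have hq : (x1 * y1 + x2 * y2) ^+ 2 <= (Nr x1 x2 * Nr y1 y2) ^+ 2.
    rewrite exprMn hs1 hs2; have := sqr_ge0 (x1 * y2 - x2 * y1); nra.
  case: (lerP (x1 * y1 + x2 * y2) 0) => h; first by nra.
  rewrite -(ler_pXn2r (_ : 0 < 2)%N) //; rewrite ?nnegrE; nra.
nra.
Qed.

Lemma Nr_swap {R : realType} (a1 a2 b1 b2 : R) :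
  Nr (a1 - b1) (a2 - b2) = Nr (b1 - a1) (b2 - a2).
Proof. by rewrite -Nr_sym !opprB. Qed.

Lemma Nr_tri_sc {R : realType} (t u x1 x2 y1 y2 : R) : 0 <= t -> 0 <= u ->
  Nr (t * x1 + u * y1) (t * x2 + u * y2) <= t * Nr x1 x2 + u * Nr y1 y2.
Proof.
move=> t0 u0; apply: le_trans (Nr_tri _ _ _ _) _.
by rewrite !Nr_scale !ger0_norm.
Qed.

Lemma cross_le {R : realType} (a1 a2 b1 b2 c1 c2 d1 d2 t t' : R) :
  0 <= t <= 1 -> 0 <= t' <= 1 ->
  a1 + t * (b1 - a1) = c1 + t' * (d1 - c1) ->
  a2 + t * (b2 - a2) = c2 + t' * (d2 - c2) ->
  Nr (a1 - c1) (a2 - c2) + Nr (b1 - d1) (b2 - d2) <=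
  Nr (a1 - b1) (a2 - b2) + Nr (c1 - d1) (c2 - d2).
Proof.
move=> /andP[t0 t1] /andP[u0 u1] h1 h2.
have e1 : a1 - c1 = t' * (d1 - c1) + t * (a1 - b1) by lra.
have e2 : a2 - c2 = t' * (d2 - c2) + t * (a2 - b2) by lra.
have f1 : b1 - d1 = (1 - t) * (b1 - a1) + (1 - t') * (c1 - d1) by lra.
have f2 : b2 - d2 = (1 - t) * (b2 - a2) + (1 - t') * (c2 - d2) by lra.
rewrite e1 e2 f1 f2.
have H1 := Nr_tri_sc t' t (d1 - c1) (d2 - c2) (a1 - b1) (a2 - b2) u0 t0.
have H2 := Nr_tri_sc (1 - t) (1 - t') (b1 - a1) (b2 - a2) (c1 - d1) (c2 - d2)
   (ltac:(lra)) (ltac:(lra)).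
rewrite (Nr_swap d1) in H1; rewrite (Nr_swap b1) in H2.
lra.
Qed.

Lemma shared_aux {R : realType} (B1 B2 D1 D2 t t' M : R) :
  0 < t -> t <= t' -> t * B1 = t' * D1 -> t * B2 = t' * D2 ->
  B1 ^+ 2 + B2 ^+ 2 < M -> (B1 - D1) ^+ 2 + (B2 - D2) ^+ 2 < M.
Proof.
move=> t0 tt h1 h2 hB.
have k1 : t' * (B1 - D1) = (t' - t) * B1 by lra.
have k2 : t' * (B2 - D2) = (t' - t) * B2 by lra.
have e : t' ^+ 2 * ((B1 - D1) ^+ 2 + (B2 - D2) ^+ 2) =
         (t' - t) ^+ 2 * (B1 ^+ 2 + B2 ^+ 2).
  have -> : t' ^+ 2 * ((B1 - D1) ^+ 2 + (B2 - D2) ^+ 2) =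
     (t' * (B1 - D1)) ^+ 2 + (t' * (B2 - D2)) ^+ 2 by ring.
  rewrite k1 k2; ring.
have hSB : 0 <= B1 ^+ 2 + B2 ^+ 2 by nra.
have l1 : (t' - t) ^+ 2 * (B1 ^+ 2 + B2 ^+ 2) <= t' ^+ 2 * (B1 ^+ 2 + B2 ^+ 2).
  apply: ler_wpM2r => //; nra.
have l2 : t' ^+ 2 * (B1 ^+ 2 + B2 ^+ 2) < t' ^+ 2 * M.
  rewrite ltr_pM2l //; nra.
have hS : t' ^+ 2 * ((B1 - D1) ^+ 2 + (B2 - D2) ^+ 2) < t' ^+ 2 * M by lra.
by move: hS; rewrite ltr_pM2l //; nra.
Qed.

Lemma shared {R : realType} (B1 B2 D1 D2 t t' M : R) :
  0 < t -> 0 < t' -> t * B1 = t' * D1 -> t * B2 = t' * D2 ->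
  B1 ^+ 2 + B2 ^+ 2 < M -> D1 ^+ 2 + D2 ^+ 2 < M ->
  (B1 - D1) ^+ 2 + (B2 - D2) ^+ 2 < M.
Proof.
move=> t0 u0 h1 h2 hB hD.
case: (lerP t t') => tt; first exact: (@shared_aux _ B1 B2 D1 D2 t t' M t0 tt h1 h2 hB).
have := @shared_aux _ D1 D2 B1 B2 t' t M u0 (ltW tt) (esym h1) (esym h2) hD.
have -> : (D1 - B1) ^+ 2 + (D2 - B2) ^+ 2 = (B1 - D1) ^+ 2 + (B2 - D2) ^+ 2 by ring.
done.
Qed.


Definition sq2 {R : realType} (z w : R * R) : R := (z.1 - w.1) ^+ 2 + (z.2 - w.2) ^+ 2.

Definition bip {n} (Ed : 'I_n -> 'I_n -> Prop) (u v : 'I_n + 'I_n) : Prop :=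
  match u, v with inl i, inr j => Ed i j | inr j, inl i => Ed i j | _, _ => False end.

Definition pt {R : realType} {n} (a b : 'I_n -> R * R) (u : 'I_n + 'I_n) : R * R :=
  match u with inl i => a i | inr j => b j end.

Definition arcf {R : realType} {n} (a b : 'I_n -> R * R) (u v : 'I_n + 'I_n) (t : R) : R * R :=
  ((pt a b u).1 + t * ((pt a b v).1 - (pt a b u).1),
   (pt a b u).2 + t * ((pt a b v).2 - (pt a b u).2)).

Definition segpt {R : realType} {n} (a b : 'I_n -> R * R) (i j : 'I_n) (t : R) : R * R :=
  ((a i).1 + t * ((b j).1 - (a i).1), (a i).2 + t * ((b j).2 - (a i).2)).

Lemma sq2C {R : realType} (z w : R * R) : sq2 z w = sq2 w z.
Proof. rewrite /sq2; ring. Qed.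

Lemma Nr_sq2 {R : realType} (z w : R * R) (c : R) : 0 <= c ->
  (c <= Nr (z.1 - w.1) (z.2 - w.2)) = (c ^+ 2 <= sq2 z w).
Proof. exact: Nr_le. Qed.

Lemma Nr_sq2_lt {R : realType} (z w : R * R) (c : R) : 0 <= c ->
  (Nr (z.1 - w.1) (z.2 - w.2) < c) = (sq2 z w < c ^+ 2).
Proof. exact: Nr_lt. Qed.


Lemma seg_disjoint {R : realType} {n} {r : R} {a b : 'I_n -> R * R}
  {Ed : 'I_n -> 'I_n -> Prop} :
  0 < r ->
  (forall i k, i != k -> (2 * r) ^+ 2 <= sq2 (a i) (a k)) ->
  (forall j l, j != l -> (2 * r) ^+ 2 <= sq2 (b j) (b l)) ->
  (forall i j, Ed i j -> sq2 (a i) (b j) < (2 * r) ^+ 2) ->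
  forall i j i' j' t t', Ed i j -> Ed i' j' -> (i, j) <> (i', j') ->
  0 < t < 1 -> 0 < t' < 1 -> segpt a b i j t <> segpt a b i' j' t'.
Proof.
move=> r0 H1 H2 H3 i j i' j' t t' e e' neq /andP[t0 t1] /andP[u0 u1] [h1 h2].
have r2 : 0 <= 2 * r by lra.
case: (eqVneq i i') => [ii|ii].
  subst i'. have jj : j != j' by apply/eqP => jj; apply: neq; rewrite jj.
  have := H2 _ _ jj.
  have hB := H3 _ _ e; have hD := H3 _ _ e'.
  rewrite sq2C in hB; rewrite sq2C in hD.
  have := @shared _ ((b j).1 - (a i).1) ((b j).2 - (a i).2)
     ((b j').1 - (a i).1) ((b j').2 - (a i).2) t t' ((2 * r) ^+ 2) t0 u0
     ltac:(lra) ltac:(lra) hB hD.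
  rewrite /sq2.
  have -> : (b j).1 - (a i).1 - ((b j').1 - (a i).1) = (b j).1 - (b j').1 by ring.
  have -> : (b j).2 - (a i).2 - ((b j').2 - (a i).2) = (b j).2 - (b j').2 by ring.
  lra.
case: (eqVneq j j') => [jj|jj].
  subst j'.
  have := H1 _ _ ii.
  have hB := H3 _ _ e; have hD := H3 _ _ e'.
  have := @shared _ ((a i).1 - (b j).1) ((a i).2 - (b j).2)
     ((a i').1 - (b j).1) ((a i').2 - (b j).2) (1 - t) (1 - t') ((2 * r) ^+ 2)
     ltac:(lra) ltac:(lra) ltac:(lra) ltac:(lra) hB hD.
  rewrite /sq2.
  have -> : (a i).1 - (b j).1 - ((a i').1 - (b j).1) = (a i).1 - (a i').1 by ring.
  have -> : (a i).2 - (b j).2 - ((a i').2 - (b j).2) = (a i).2 - (a i').2 by ring.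
  lra.
have tt : 0 <= t <= 1 by apply/andP; split; lra.
have tt' : 0 <= t' <= 1 by apply/andP; split; lra.
have := @cross_le _ (a i).1 (a i).2 (b j).1 (b j).2 (a i').1 (a i').2 (b j').1 (b j').2 t t' tt tt' h1 h2.
have := H1 _ _ ii; rewrite -Nr_sq2 //.
have := H2 _ _ jj; rewrite -Nr_sq2 //.
have := H3 _ _ e; rewrite -Nr_sq2_lt //.
have := H3 _ _ e'; rewrite -Nr_sq2_lt //.
lra.
Qed.

Lemma sq2_ge0 {R : realType} (z w : R * R) : 0 <= sq2 z w.
Proof. by rewrite /sq2 addr_ge0 ?sqr_ge0. Qed.

Lemma sq2_0 {R : realType} (z : R * R) : sq2 z z = 0.
Proof. by rewrite /sq2 !subrr expr0n /= addr0. Qed.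

Lemma pair_eq {R : realType} (z w : R * R) : z.1 = w.1 -> z.2 = w.2 -> z = w.
Proof. by case: z => ??; case: w => ?? /= -> ->. Qed.

Lemma lin0 {R : realType} (t x y : R) : t != 0 -> t * (y - x) = 0 -> x = y.
Proof.
move=> t0 /eqP; rewrite mulf_eq0 (negbTE t0) /= subr_eq0 => /eqP ->. done.
Qed.

Lemma seg_avoid {R : realType} {n} {r : R} {a b : 'I_n -> R * R}
  {Ed : 'I_n -> 'I_n -> Prop} :
  0 < r ->
  (forall i k, i != k -> (2 * r) ^+ 2 <= sq2 (a i) (a k)) ->
  (forall j l, j != l -> (2 * r) ^+ 2 <= sq2 (b j) (b l)) ->
  (forall i j, Ed i j -> sq2 (a i) (b j) < (2 * r) ^+ 2) ->
  (forall i j, a i <> b j) ->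
  forall i j t w, Ed i j -> 0 < t < 1 -> segpt a b i j t <> pt a b w.
Proof.
move=> r0 H1 H2 H3 H4 i j t w e /andP[t0 t1].
have hB := H3 _ _ e; have hB0 := sq2_ge0 (a i) (b j).
case: w => [k|l] /= h; have h1 := congr1 fst h; have h2 := congr1 snd h; rewrite /segpt /= in h1 h2.
  case: (eqVneq i k) => [ik|ik].
    subst k; apply: (H4 i j); apply: pair_eq; apply: (@lin0 _ t).
    - by rewrite gt_eqF.
    - lra.
    - by rewrite gt_eqF.
    - lra.
  have := H1 _ _ ik.
  have -> : sq2 (a i) (a k) = t ^+ 2 * sq2 (a i) (b j) by rewrite /sq2 -h1 -h2; ring.
  have ht : t ^+ 2 <= 1 by nra.
  have : t ^+ 2 * sq2 (a i) (b j) <= sq2 (a i) (b j).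
    by rewrite -{2}(mul1r (sq2 (a i) (b j))); apply: ler_wpM2r.
  lra.
case: (eqVneq j l) => [jl|jl].
  subst l; apply: (H4 i j); apply: pair_eq; apply: (@lin0 _ (1 - t)).
  - by rewrite gt_eqF // subr_gt0.
  - lra.
  - by rewrite gt_eqF // subr_gt0.
  - lra.
have := H2 _ _ jl.
have -> : sq2 (b j) (b l) = (1 - t) ^+ 2 * sq2 (a i) (b j) by rewrite /sq2 -h1 -h2; ring.
have ht : (1 - t) ^+ 2 <= 1 by nra.
have : (1 - t) ^+ 2 * sq2 (a i) (b j) <= sq2 (a i) (b j).
  by rewrite -{2}(mul1r (sq2 (a i) (b j))); apply: ler_wpM2r.
lra.
Qed.

Local Open Scope classical_set_scope.

Lemma aff_cont (R : realType) (a c : R) : continuous (fun t : R => a + t * c).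
Proof.
move=> x.
have H2 : {for x, continuous (fun t : R => t * c)}.
  apply: (@continuousM _ _ (fun t => t) (fun=> c)).
    exact: (fun x => @cvg_id _ _).
  exact: cst_continuous.
have H1 : {for x, continuous (fun t : R => a)} by exact: cst_continuous.
have := (@continuousD R R^o R (fun=> a) (fun t : R => t * c) x H1 H2).
by apply.
Qed.

Lemma pair_cont (R : realType) (a1 a2 c1 c2 : R) :
  continuous (fun t : R => (a1 + t * c1, a2 + t * c2)).
Proof.
move=> x.
have H1 := aff_cont R a1 c1 x. have H2 := aff_cont R a2 c2 x. exact: (cvg_pair H1 H2).
Qed.

Local Close Scope classical_set_scope.

Lemma edge_cases {n} {Ed : 'I_n -> 'I_n -> Prop} {u v} : bip Ed u v ->
  exists i j, Ed i j /\ ((u = inl i /\ v = inr j) \/ (u = inr j /\ v = inl i)).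
Proof.
by case: u => [i|j]; case: v => [k|l] //= e; do 2 eexists; split; eauto.
Qed.

Lemma planar_gen {R : realType} {n} (r : R) (a b : 'I_n -> R * R)
  (Ed : 'I_n -> 'I_n -> Prop) :
  0 < r ->
  (forall i k, i != k -> (2 * r) ^+ 2 <= sq2 (a i) (a k)) ->
  (forall j l, j != l -> (2 * r) ^+ 2 <= sq2 (b j) (b l)) ->
  (forall i j, Ed i j -> sq2 (a i) (b j) < (2 * r) ^+ 2) ->
  (forall i j, a i <> b j) ->
  planar_drawing (bip Ed) (pt a b) (arcf a b).
Proof.
move=> r0 H1 H2 H3 H4.
have M0 : 0 < (2 * r) ^+ 2 by rewrite exprn_gt0 // mulr_gt0.
have arc_lr : forall i j t, arcf a b (inl i) (inr j) t = segpt a b i j t by [].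
have arc_rl : forall i j t, arcf a b (inr j) (inl i) t = segpt a b i j (1 - t).
  move=> i j t; rewrite /arcf /segpt /=; congr pair; ring.
have pne : forall u v, bip Ed u v -> pt a b u <> pt a b v.
  move=> u v /edge_cases [i [j [e [[-> ->]|[-> ->]]]]] /=; first exact: H4.
  by move=> h; apply: (H4 i j); rewrite h.
split.
  case=> [i|j]; case=> [k|l] //= h.
  - case: (eqVneq i k) => [->//|ik]; have := H1 _ _ ik; rewrite h sq2_0 => ?; exfalso; lra.
  - by case: (H4 i l).
  - by case: (H4 k j).
  - case: (eqVneq j l) => [->//|jl]; have := H2 _ _ jl; rewrite h sq2_0 => ?; exfalso; lra.
move=> u v E.
split.
- rewrite /arcf; apply: continuous_subspaceT; exact: pair_cont.
- by split; rewrite /arcf; case: (pt a b u) => ??; case: (pt a b v) => ?? /=;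
    congr pair; ring.
- move=> t t' _ _ h.
  have h1 := congr1 fst h; have h2 := congr1 snd h; rewrite /arcf /= in h1 h2.
  have := pne _ _ E.
  case: (eqVneq t t') => [//|tt] hn; exfalso; apply: hn.
  apply: pair_eq; apply: (@lin0 _ (t - t')); rewrite ?subr_eq0 //; lra.
- move=> t w ht.
  have [i [j [e [[-> ->]|[-> ->]]]]] := edge_cases E.
    rewrite arc_lr; exact: (seg_avoid r0 H1 H2 H3 H4 _ _ _ w e ht).
  rewrite arc_rl; apply: (seg_avoid r0 H1 H2 H3 H4 _ _ _ w e).
  by move: ht => /andP[? ?]; apply/andP; split; lra.
- move=> u' v' E' hn1 hn2 t t' ht ht'.
  have ht1 : 0 < 1 - t < 1 by move: ht => /andP[? ?]; apply/andP; split; lra.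
  have ht1' : 0 < 1 - t' < 1 by move: ht' => /andP[? ?]; apply/andP; split; lra.
  have [i [j [e [[? ?]|[? ?]]]]] := edge_cases E; subst u v;
  have [i' [j' [e' [[? ?]|[? ?]]]]] := edge_cases E'; subst u' v';
  rewrite ?arc_lr ?arc_rl; apply: (seg_disjoint r0 H1 H2 H3) => //;
  by case=> ??; subst i' j'; tauto.
Qed.


Lemma scal_cone {R : realType} (al be ga de : R) :
  0 <= al -> 0 <= be -> 0 <= ga -> 0 <= de ->
  ga ^+ 2 + de ^+ 2 + ga * de <= al ^+ 2 + be ^+ 2 + al * be ->
  (al - ga) ^+ 2 + (be - de) ^+ 2 + (al - ga) * (be - de) <=
  al ^+ 2 + be ^+ 2 + al * be.
Proof.
move=> a0 b0 c0 d0 hQP.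
set P := al ^+ 2 + be ^+ 2 + al * be.
set Q := ga ^+ 2 + de ^+ 2 + ga * de.
set M := 2 * al * ga + 2 * be * de + al * de + be * ga.
have hM : 0 <= M by rewrite /M; nra.
have hQ : 0 <= Q by rewrite /Q; nra.
have hid : M ^+ 2 - P * Q = 3 * (al * ga + be * de + be * ga) * (al * ga + be * de + al * de).
  rewrite /M /P /Q; ring.
have h3 : 0 <= 3 * (al * ga + be * de + be * ga) * (al * ga + be * de + al * de).
  apply: mulr_ge0; [apply: mulr_ge0 => //|]; nra.
have hPQ : Q * Q <= P * Q := ler_wpM2r hQ hQP.
have hMQ : Q <= M.
  case: (lerP Q M) => // hlt.
  have hMM : M * M <= M * Q := ler_wpM2l hM (ltW hlt).
  have hQ0 : 0 < Q := le_lt_trans hM hlt.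
  have hMQ2 : M * Q < Q * Q by rewrite ltr_pM2r.
  have : M ^+ 2 = M * M by rewrite expr2.
  lra.
have -> : (al - ga) ^+ 2 + (be - de) ^+ 2 + (al - ga) * (be - de) = P + Q - M.
  rewrite /P /Q /M; ring.
lra.
Qed.

Definition nsq {R : realType} (u : R * R) : R := u.1 ^+ 2 + u.2 ^+ 2.
Definition dot {R : realType} (u v : R * R) : R := u.1 * v.1 + u.2 * v.2.
Definition lin {R : realType} (al : R) (u : R * R) (be : R) (v : R * R) : R * R :=
  (al * u.1 + be * v.1, al * u.2 + be * v.2).
Definition vsub {R : realType} (u v : R * R) : R * R := (u.1 - v.1, u.2 - v.2).
Definition incone {R : realType} (u v z : R * R) : Prop :=
  exists al be, [/\ 0 <= al, 0 <= be & z = lin al u be v].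

Lemma nsq_lin {R : realType} (al be : R) u v :
  nsq (lin al u be v) = al ^+ 2 * nsq u + be ^+ 2 * nsq v + 2 * al * be * dot u v.
Proof. rewrite /nsq /lin /dot /=; ring. Qed.

Lemma close_cone {R : realType} (K B : R) (u v z z' : R * R) :
  0 <= K -> nsq u = K -> nsq v = K -> 2 * dot u v = K ->
  incone u v z -> incone u v z' -> nsq z < B -> nsq z' < B -> nsq (vsub z z') < B.
Proof.
move=> K0 hu hv hd [al [be [a0 b0 ->]]] [ga [de [c0 d0 ->]]].
have ex : forall x y : R, nsq (lin x u y v) = K * (x ^+ 2 + y ^+ 2 + x * y).
  move=> x y; rewrite nsq_lin hu hv.
  have -> : 2 * x * y * dot u v = x * y * (2 * dot u v) by ring.
  rewrite hd; ring.
have -> : vsub (lin al u be v) (lin ga u de v) = lin (al - ga) u (be - de) v.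
  rewrite /vsub /lin /=; congr pair; ring.
rewrite !ex => hz hz'.
case: (lerP (ga ^+ 2 + de ^+ 2 + ga * de) (al ^+ 2 + be ^+ 2 + al * be)) => hc.
  apply: le_lt_trans hz; apply: ler_wpM2l => //; exact: scal_cone.
apply: le_lt_trans hz'; apply: ler_wpM2l => //.
have -> : (al - ga) ^+ 2 + (be - de) ^+ 2 + (al - ga) * (be - de) =
          (ga - al) ^+ 2 + (de - be) ^+ 2 + (ga - al) * (de - be) by ring.
apply: scal_cone => //; exact: ltW.
Qed.

Ltac fld := field; repeat (apply/andP; split); rewrite ?pnatr_eq0 //.

Definition rot60 {R : realType} (e : R * R) : R * R :=
  (e.1 / 2 - Num.sqrt 3 * e.2 / 2, e.2 / 2 + Num.sqrt 3 * e.1 / 2).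

Lemma sqrt3_sq {R : realType} : Num.sqrt (3 : R) ^+ 2 = 3.
Proof. by rewrite sqr_sqrtr // ler0n. Qed.

Lemma rot60_nsq {R : realType} (e : R * R) : nsq (rot60 e) = nsq e.
Proof.
rewrite /nsq /rot60 /=.
have -> : (e.1 / 2 - Num.sqrt 3 * e.2 / 2) ^+ 2 + (e.2 / 2 + Num.sqrt 3 * e.1 / 2) ^+ 2
  = (e.1 ^+ 2 + e.2 ^+ 2) * (1 + Num.sqrt 3 ^+ 2) / 4 by fld.
rewrite sqrt3_sq; fld.
Qed.

Lemma rot60_dot {R : realType} (e : R * R) : 2 * dot e (rot60 e) = nsq e.
Proof. rewrite /nsq /dot /rot60 /=; fld. Qed.

Lemma rot60_det {R : realType} (e : R * R) :
  e.1 * (rot60 e).2 - e.2 * (rot60 e).1 = Num.sqrt 3 * nsq e / 2.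
Proof. rewrite /nsq /rot60 /=; fld. Qed.

Lemma cramer {R : realType} (e f z : R * R) :
  e.1 * f.2 - e.2 * f.1 != 0 ->
  z = lin ((z.1 * f.2 - z.2 * f.1) / (e.1 * f.2 - e.2 * f.1)) e
          ((e.1 * z.2 - e.2 * z.1) / (e.1 * f.2 - e.2 * f.1)) f.
Proof.
move=> h; rewrite /lin; case: z => z1 z2 /=; congr pair; field => //.
Qed.

Definition cn {R : realType} (x y : R) : nat :=
  if 0 <= x then (if 0 <= y then 0%N else if 0 <= x + y then 5%N else 4%N)
  else (if 0 <= y then (if 0 <= x + y then 1%N else 2%N) else 3%N).

Definition vneg {R : realType} (u : R * R) : R * R := (- u.1, - u.2).

Definition gens {R : realType} (e f : R * R) (k : nat) : (R * R) * (R * R) :=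
  match k with
  | 0 => (e, f)
  | 1 => (f, vsub f e)
  | 2 => (vsub f e, vneg e)
  | 3 => (vneg e, vneg f)
  | 4 => (vneg f, vsub e f)
  | _ => (vsub e f, e)
  end%N.

Lemma cn_le5 {R : realType} (x y : R) : (cn x y <= 5)%N.
Proof. by rewrite /cn; repeat case: ifP. Qed.

Lemma cn_cone {R : realType} (e f : R * R) (x y : R) :
  incone (gens e f (cn x y)).1 (gens e f (cn x y)).2 (lin x e y f).
Proof.
rewrite /cn; case: (lerP 0 x) => hx; case: (lerP 0 y) => hy;
  try case: (lerP 0 (x + y)) => hxy; rewrite /incone /lin /vsub /vneg /=.
- by exists x, y; split => //.
- by exists x, y; split => //.
- by exists (- y), (x + y); split; [lra|lra|congr pair; ring].
- by exists (- (x + y)), x; split; [lra|lra|congr pair; ring].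
- by exists (x + y), (- x); split; [lra|lra|congr pair; ring].
- by exists y, (- (x + y)); split; [lra|lra|congr pair; ring].
- by exists (- x), (- y); split; [lra|lra|congr pair; ring].
- by exists (- x), (- y); split; [lra|lra|congr pair; ring].
Qed.

Lemma gens_ok {R : realType} (e f : R * R) (k : nat) (K : R) :
  nsq e = K -> nsq f = K -> 2 * dot e f = K ->
  [/\ nsq (gens e f k).1 = K, nsq (gens e f k).2 = K & 2 * dot (gens e f k).1 (gens e f k).2 = K].
Proof.
rewrite /nsq /dot /vsub /vneg => he hf hd.
by case: k => [|[|[|[|[|k]]]]] /=; split; nra.
Qed.

Lemma deg_bound {R : realType} {T : finType} (q : T -> R * R) (c : R * R) (B : R)
  (A : {set T}) :
  (forall x, x \in A -> sq2 (q x) c < B) ->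
  (forall x y, x \in A -> y \in A -> x != y -> B <= sq2 (q x) (q y)) ->
  (#|A| <= 5)%N.
Proof.
move=> hA hD.
case: (set_0Vmem A) => [->|[x0 x0A]]; first by rewrite cards0.
rewrite (cardsD1 x0 A) x0A add1n ltnS.
pose vec := fun x => vsub (q x) c.
have hv : forall x, sq2 (q x) c = nsq (vec x) by [].
have hvv : forall x y, sq2 (q x) (q y) = nsq (vsub (vec x) (vec y)).
  by move=> x y; rewrite /sq2 /nsq /vsub /vec /=; ring.
pose e := vec x0.
have nsq_ge0 : forall u : R * R, 0 <= nsq u by move=> u; rewrite /nsq addr_ge0 ?sqr_ge0.
case: (eqVneq (nsq e) 0) => [e0|e0].
  have [e1 e2] : e.1 = 0 /\ e.2 = 0.
    move: e0; rewrite /nsq => /eqP; rewrite paddr_eq0 ?sqr_ge0 // => /andP[].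
    by rewrite !sqrf_eq0 => /eqP -> /eqP ->.
  rewrite (@eq_card0 _ (A :\ x0)) // => y; rewrite !inE; apply/negbTE/negP => /andP[yx yA].
  have := hD y x0 yA x0A yx; have := hA y yA; rewrite hvv hv.
  rewrite /nsq /vsub /=.
  have e1' : (q x0).1 - c.1 = 0 := e1.
  have e2' : (q x0).2 - c.2 = 0 := e2.
  rewrite e1' e2' !subr0; lra.
pose K := nsq e.
have K0 : 0 < K by rewrite /K lt_def e0 nsq_ge0.
pose f := rot60 e.
pose det := e.1 * f.2 - e.2 * f.1.
have det0 : det != 0.
  rewrite /det /f rot60_det; apply: lt0r_neq0; apply: divr_gt0 => //.
  apply: mulr_gt0 => //; by rewrite sqrtr_gt0 ltr0n.
pose cx := fun y => ((vec y).1 * f.2 - (vec y).2 * f.1) / det.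
pose cy := fun y => (e.1 * (vec y).2 - e.2 * (vec y).1) / det.
have hz : forall y, vec y = lin (cx y) e (cy y) f by move=> y; exact: cramer.
pose k := fun y => cn (cx y) (cy y).
have hcone : forall y, incone (gens e f (k y)).1 (gens e f (k y)).2 (vec y).
  by move=> y; have := cn_cone e f (cx y) (cy y); rewrite -hz.
have hg : forall m, [/\ nsq (gens e f m).1 = K, nsq (gens e f m).2 = K
           & 2 * dot (gens e f m).1 (gens e f m).2 = K].
  move=> m; apply: gens_ok => //; [exact: rot60_nsq | exact: rot60_dot].
have conflict : forall y y' m, y \in A -> y' \in A -> y != y' ->
    incone (gens e f m).1 (gens e f m).2 (vec y) ->
    incone (gens e f m).1 (gens e f m).2 (vec y') -> False.
  move=> y y' m yA y'A yy c1 c2.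
  have [g1 g2 g3] := hg m.
  have := @close_cone _ K B _ _ _ _ (ltW K0) g1 g2 g3 c1 c2 (hA y yA) (hA y' y'A).
  have := hD y y' yA y'A yy; rewrite hvv; lra.
have he0 : incone (gens e f 0).1 (gens e f 0).2 (vec x0).
  exists 1, 0; split => //; rewrite /= /e /vec /vsub /=; congr pair; rewrite /=; ring.
have he5 : incone (gens e f 5).1 (gens e f 5).2 (vec x0).
  exists 0, 1; split => //; rewrite /= /e /vec /vsub /=; congr pair; rewrite /=; ring.
have hk : forall y, y \in A :\ x0 -> (0 < k y < 5)%N.
  move=> y; rewrite !inE => /andP[yx yA].
  have := cn_le5 (cx y) (cy y); rewrite -/(k y).
  case E : (k y) => [|m].
    move=> _; exfalso; apply: (conflict y x0 0 yA x0A yx); [by have := hcone y; rewrite E | exact: he0].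
  case: (eqVneq m 4) => [m4|m4].
    subst m; move=> _; exfalso; apply: (conflict y x0 5 yA x0A yx); [by have := hcone y; rewrite E | exact: he5].
  by move=> h; apply/andP; split => //; rewrite ltn_neqAle eqSS m4 /=.
pose phi := fun y => (inord (k y).-1 : 'I_4).
have inj : {in A :\ x0 &, injective phi}.
  move=> y y' yA y'A /(congr1 val); rewrite /phi /=.
  have /andP[k1 k2] := hk y yA; have /andP[k1' k2'] := hk y' y'A.
  rewrite !inordK; last 2 first.
  - by case: (k y') k1' k2'.
  - by case: (k y) k1 k2.
  move=> hkk.
  have ekk : k y = k y' by case: (k y) k1 hkk => // a _; case: (k y') k1' => // b _ /= ->.
  case: (eqVneq y y') => // yy; exfalso.
  move: yA y'A; rewrite !inE => /andP[_ yA] /andP[_ y'A].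
  apply: (conflict y y' (k y) yA y'A yy); first exact: hcone.
  rewrite ekk; exact: hcone.
rewrite -(card_in_imset inj).
by apply: leq_trans (max_card _) _; rewrite card_ord.
Qed.


Lemma minpos {R : realType} (l : seq R) :
  exists m : R, 0 < m /\ forall x, x \in l -> 0 < x -> m <= x.
Proof.
elim: l => [|y l [m [m0 hm]]]; first by exists 1; split.
case: (lerP y 0) => hy.
  exists m; split => // x; rewrite inE => /orP[/eqP ->|xl] hx; first lra.
  exact: hm.
exists (Num.min m y); split; first by rewrite lt_min m0 hy.
move=> x; rewrite inE => /orP[/eqP ->|xl] hx; first by rewrite ge_min lexx orbT.
by rewrite ge_min hm.
Qed.

Lemma Nr_x0 {R : realType} (x : R) : 0 <= x -> Nr (- x) 0 = x.
Proof. by move=> x0; rewrite /Nr expr0n addr0 sqrrN sqrtr_sqr ger0_norm. Qed.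

Lemma feas_sq {R : realType} {n} {r : R} {a : 'I_n -> R * R} :
  feasible r a -> forall i k, i != k -> (2 * r) ^+ 2 <= sq2 (a i) (a k).
Proof. by move=> F i k ik; rewrite leNgt; apply/negP => h; apply: (F i k ik). Qed.

Theorem proposition3 (R : realType) (n : nat) (r : R)
  (s g : 'I_n -> R * R) :
  0 < r -> feasible r s -> feasible r g ->
  [/\ bipartite_between (udg r s g),
      planar R (udg r s g) &
      max_degree_le (udg r s g) 5].
Proof.
move=> r0 Fs Fg.
have r2 : 0 <= 2 * r by lra.
split.
- by case=> [i|j]; case=> [k|l].
- pose F1 := fun ij : 'I_n * 'I_n =>
    2 * r - Nr ((s ij.1).1 - (g ij.2).1) ((s ij.1).2 - (g ij.2).2).
  pose F2 := fun ij : 'I_n * 'I_n => (s ij.1).1 - (g ij.2).1.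
  have [m [m0 hm]] := minpos ([seq F1 ij | ij <- enum [set: 'I_n * 'I_n]] ++
                             [seq F2 ij | ij <- enum [set: 'I_n * 'I_n]]).
  have inl1 : forall ij, F1 ij \in [seq F1 ij | ij <- enum [set: 'I_n * 'I_n]] ++
                             [seq F2 ij | ij <- enum [set: 'I_n * 'I_n]].
    by move=> ij; rewrite mem_cat map_f // mem_enum inE.
  have inl2 : forall ij, F2 ij \in [seq F1 ij | ij <- enum [set: 'I_n * 'I_n]] ++
                             [seq F2 ij | ij <- enum [set: 'I_n * 'I_n]].
    by move=> ij; rewrite mem_cat orbC map_f // mem_enum inE.
  pose eps := m / 2.
  have eps0 : 0 < eps by rewrite /eps divr_gt0.
  have epsm : eps < m by rewrite /eps; lra.
  pose b := fun j => ((g j).1 + eps, (g j).2).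
  exists (pt s b), (arcf s b).
  apply: (@planar_gen R n r s b (fun i j => discs_overlap r (s i) (g j)) r0).
  + exact: feas_sq.
  + move=> j l jl.
    have -> : sq2 (b j) (b l) = sq2 (g j) (g l) by rewrite /sq2 /b /=; ring.
    exact: feas_sq.
  + move=> i j e.
    have hlt : Nr ((s i).1 - (g j).1) ((s i).2 - (g j).2) < 2 * r.
      by rewrite (Nr_sq2_lt (s i) (g j)).
    have hF := hm _ (inl1 (i, j)); rewrite /F1 /= in hF.
    have := hF ltac:(lra) => hmF.
    rewrite -(Nr_sq2_lt (s i) (b j)) //.
    have := Nr_tri ((s i).1 - (g j).1) ((s i).2 - (g j).2) (- eps) 0.
    rewrite Nr_x0 ?(ltW eps0) // /b /=.
    have -> : (s i).1 - ((g j).1 + eps) = (s i).1 - (g j).1 + - eps by ring.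
    have -> : (s i).2 - (g j).2 + 0 = (s i).2 - (g j).2 by ring.
    lra.
  + move=> i j h.
    have h1 := congr1 fst h; rewrite /b /= in h1.
    have hF := hm _ (inl2 (i, j)); rewrite /F2 /= in hF.
    have := hF ltac:(lra); lra.
- move=> u.
  exists [set w | `[< udg r s g u w >]]; split.
    by move=> v E; rewrite inE; apply/asboolP.
  apply: (@deg_bound R _ (pt s g) (pt s g u) ((2 * r) ^+ 2)).
  + move=> x; rewrite inE => /asboolP.
    case: u => [i|j]; case: x => [k|l] //= h; try exact: h.
    by rewrite sq2C.
  + move=> x y; rewrite !inE => hx hy xy.
    case: u hx hy => [i|j]; case: x xy => [k|l] xy; case: y xy => [k'|l'] xy hx hy;
      try (by move: hx => /asboolP); try (by move: hy => /asboolP).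
    * apply: (feas_sq Fg); apply: contraNneq xy => ->; done.
    * apply: (feas_sq Fs); apply: contraNneq xy => ->; done.
Qed.
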